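(* Let $m'$ be an integer with $m'\not\equiv3,6\pmod9$. Then there exist integers $x_1,x_2,x_3,x_4$ such that $m'\equiv x_1^2+x_2^2+x_3^2+x_4^2\pmod{27}$, $x_1^2+x_2^2\not\equiv1\pmod3$, $x_3^2+x_4^2\not\equiv1\pmod3$, $x_1^2+x_2^2\not\equiv0\pmod{27}$ and $x_3^2+x_4^2\not\equiv0\pmod{27}$. *)

(* Defs.v *)
From Stdlib Require Import ZArith.

(* Main.v *)
Require Import Defs.
From Stdlib Require Import ZArith Lia.
Open Scope Z_scope.

Lemma aux (n : nat) : (n < 27)%nat ->
  (Z.of_nat n) mod 9 <> 3 -> (Z.of_nat n) mod 9 <> 6 ->
  exists x1 x2 x3 x4 : Z,
    Z.of_nat n = (x1^2 + x2^2 + x3^2 + x4^2) mod 27 /\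
    (x1^2 + x2^2) mod 3 <> 1 /\
    (x3^2 + x4^2) mod 3 <> 1 /\
    (x1^2 + x2^2) mod 27 <> 0 /\
    (x3^2 + x4^2) mod 27 <> 0.
Proof.
  intros Hn H1 H2.
  destruct n as [|n].
  { exists 0, 3, 3, 3; vm_compute; repeat split; discriminate. }
  destruct n as [|n].
  { exists 1, 1, 1, 5; vm_compute; repeat split; discriminate. }
  destruct n as [|n].
  { exists 0, 3, 1, 10; vm_compute; repeat split; discriminate. }
  destruct n as [|n].
  { vm_compute in H1, H2; congruence. }
  destruct n as [|n].
  { exists 1, 1, 1, 1; vm_compute; repeat split; discriminate. }
  destruct n as [|n].
  { exists 0, 3, 1, 7; vm_compute; repeat split; discriminate. }
  destruct n as [|n].
  { vm_compute in H1, H2; congruence. }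
  destruct n as [|n].
  { exists 1, 1, 1, 2; vm_compute; repeat split; discriminate. }
  destruct n as [|n].
  { exists 0, 3, 1, 5; vm_compute; repeat split; discriminate. }
  destruct n as [|n].
  { exists 3, 3, 3, 3; vm_compute; repeat split; discriminate. }
  destruct n as [|n].
  { exists 1, 1, 1, 13; vm_compute; repeat split; discriminate. }
  destruct n as [|n].
  { exists 0, 3, 1, 1; vm_compute; repeat split; discriminate. }
  destruct n as [|n].
  { vm_compute in H1, H2; congruence. }
  destruct n as [|n].
  { exists 1, 1, 1, 8; vm_compute; repeat split; discriminate. }
  destruct n as [|n].
  { exists 0, 3, 1, 2; vm_compute; repeat split; discriminate. }
  destruct n as [|n].
  { vm_compute in H1, H2; congruence. }
  destruct n as [|n].
  { exists 1, 1, 1, 11; vm_compute; repeat split; discriminate. }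
  destruct n as [|n].
  { exists 0, 3, 1, 13; vm_compute; repeat split; discriminate. }
  destruct n as [|n].
  { exists 0, 3, 0, 3; vm_compute; repeat split; discriminate. }
  destruct n as [|n].
  { exists 1, 1, 1, 4; vm_compute; repeat split; discriminate. }
  destruct n as [|n].
  { exists 0, 3, 1, 8; vm_compute; repeat split; discriminate. }
  destruct n as [|n].
  { vm_compute in H1, H2; congruence. }
  destruct n as [|n].
  { exists 1, 1, 1, 10; vm_compute; repeat split; discriminate. }
  destruct n as [|n].
  { exists 0, 3, 1, 11; vm_compute; repeat split; discriminate. }
  destruct n as [|n].
  { vm_compute in H1, H2; congruence. }
  destruct n as [|n].
  { exists 1, 1, 1, 7; vm_compute; repeat split; discriminate. }
  destruct n as [|n].
  { exists 0, 3, 1, 4; vm_compute; repeat split; discriminate. }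
  lia.
Qed.

Theorem lemma2 (m' : Z) :
  m' mod 9 <> 3 -> m' mod 9 <> 6 ->
  exists x1 x2 x3 x4 : Z,
    m' mod 27 = (x1^2 + x2^2 + x3^2 + x4^2) mod 27 /\
    (x1^2 + x2^2) mod 3 <> 1 /\
    (x3^2 + x4^2) mod 3 <> 1 /\
    (x1^2 + x2^2) mod 27 <> 0 /\
    (x3^2 + x4^2) mod 27 <> 0.
Proof.
  intros H1 H2.
  assert (Hr : 0 <= m' mod 27 < 27) by (apply Z.mod_pos_bound; lia).
  assert (H9 : (m' mod 27) mod 9 = m' mod 9).
  { rewrite (Z.mod_eq m' 27) by lia.
    replace (m' - 27 * (m' / 27)) with (m' + (- 3 * (m' / 27)) * 9) by ring.
    apply Z.mod_add; lia. }
  assert (E : Z.of_nat (Z.to_nat (m' mod 27)) = m' mod 27) by (apply Z2Nat.id; lia).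
  rewrite <- E.
  apply aux; rewrite ?E; [lia | congruence | congruence].
Qed.
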